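(* $\mathfrak{mac}(\mathsf{null}\setminus\{\emptyset\},\subseteq)=\mathfrak{c}$.
   Context: $\mathsf{null}$ is the ideal of Lebesgue measure zero subsets of $2^\omega$, ordered by inclusion. For a poset $P$, an antichain is a set of pairwise incomparable elements and $\mathfrak{mac}(P)$ is the minimal cardinality of a maximal (under inclusion) antichain. $\mathfrak{c}=2^{\aleph_0}$. *)

(* Defs.v *)
From HB Require Import structures.
From mathcomp Require Import all_boot all_order all_algebra.
From mathcomp Require Import boolp classical_sets cardinality.
Set Implicit Arguments. Unset Strict Implicit. Unset Printing Implicit Defensive.
Import Order.TTheory GRing.Theory Num.Theory.
Local Open Scope classical_set_scope.
Local Open Scope ring_scope.

Definition cantor := nat -> bool.

(* Basic clopen cylinder [s] determined by a finite binary string s;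
   its Lebesgue (coin-flipping) measure is 2^-(size s). *)
Definition cyl (s : seq bool) : set cantor :=
  [set x | forall i : nat, (i < size s)%N -> x i = nth false s i].

Definition null_set (A : set cantor) : Prop :=
  forall k : nat, exists s : nat -> seq bool,
    A `<=` \bigcup_n cyl (s n) /\
    forall N : nat, \sum_(n < N) ((2%:R : rat) ^- size (s n)) <= (2%:R : rat) ^- k.

Definition null_nonempty : set (set cantor) :=
  [set A | null_set A /\ A <> set0].

Definition antichain (X : set (set cantor)) : Prop :=
  X `<=` null_nonempty /\
  forall a b, X a -> X b -> a <> b -> ~ (a `<=` b) /\ ~ (b `<=` a).

Definition maximal_antichain (X : set (set cantor)) : Prop :=
  antichain X /\ forall Y, antichain Y -> X `<=` Y -> Y = X.

(* Main.v *)
Require Import Defs.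
From HB Require Import structures.
From mathcomp Require Import all_boot all_order all_algebra.
From mathcomp Require Import boolp classical_sets cardinality.
From mathcomp Require Import ring lra.
Unset Printing Implicit Defensive.
Import Order.TTheory GRing.Theory Num.Theory.
Local Open Scope classical_set_scope.
Local Open Scope ring_scope.

Definition two : rat := 2%:R.

Fixpoint mu (t s : seq bool) : rat :=
  match t, s with
  | [::], _ => two ^- size s
  | _ :: _, [::] => 1
  | b :: t', c :: s' => if b == c then mu t' s' else 0
  end.

Lemma two_gt0 : 0 < two. Proof. by rewrite /two ltr0n. Qed.
Lemma two_neq0 : two != 0. Proof. by rewrite /two pnatr_eq0. Qed.
Lemma tpow_gt0 n : 0 < two ^- n.
Proof. by rewrite invr_gt0 exprn_gt0 // two_gt0. Qed.
Lemma tpowS n : two ^- n.+1 = two ^- n / two.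
Proof. by rewrite exprS invfM mulrC. Qed.

Lemma mu_ge0 t s : 0 <= mu t s.
Proof.
elim: t s => [|b t IH] [|c s] //=; try exact: ltW (tpow_gt0 _).
by case: eqP.
Qed.

Lemma mu_rcons t s : mu (rcons t false) s + mu (rcons t true) s = 2 * mu t s.
Proof.
elim: t s => [|a t IH] [|c s] /=.
- by rewrite expr0 invr1; lra.
- rewrite tpowS; case: c => /=; rewrite /two; field; exact (expf_neq0 _ two_neq0).
- lra.
- by case: eqP => _; [exact: IH|lra].
Qed.

Section Cov.
Variable c : nat -> seq bool.
Definition S N t := \sum_(0 <= n < N) mu t (c n).
Definition good (b : rat) t := forall N, S N t <= b.

Lemma S_mono N M t : (N <= M)%N -> S N t <= S M t.
Proof.
move=> NM; rewrite /S (big_cat_nat (leq0n N) NM) /= lerDl.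
by apply: sumr_ge0 => i _; exact: mu_ge0.
Qed.

Lemma S0 t : S 0 t = 0. Proof. by rewrite /S big_geq. Qed.

Lemma S_rcons N t : S N (rcons t false) + S N (rcons t true) = 2 * S N t.
Proof.
rewrite /S -big_split /= mulr_sumr; apply: eq_bigr => i _; exact: mu_rcons.
Qed.
End Cov.

Definition ext (t t' : seq bool) :=
  (size t <= size t')%N /\ forall i, (i < size t)%N -> nth false t' i = nth false t i.

Lemma ext_refl t : ext t t. Proof. by split. Qed.
Lemma ext_trans t1 t2 t3 : ext t1 t2 -> ext t2 t3 -> ext t1 t3.
Proof.
move=> [s12 e12] [s23 e23]; split; first exact: leq_trans s12 s23.
move=> i hi; rewrite e23 ?e12 //; exact: leq_trans hi s12.
Qed.
Lemma ext_rcons t b : ext t (rcons t b).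
Proof. by split=> [|i hi]; rewrite ?size_rcons // nth_rcons hi. Qed.

Section Split.
Variable c : nat -> seq bool.

Lemma split_ex b t : good c b t -> b < 1 ->
  exists t' g, [/\ ext t t', g < 1, good c g (rcons t' false) & good c g (rcons t' true)].
Proof.
move=> gt b1; apply: contrapT => Hn.
have H : forall t' g, ext t t' -> g < 1 -> good c g (rcons t' false) ->
    ~ good c g (rcons t' true).
  by move=> t' g e g1 h0 h1; apply: Hn; exists t', g.
set d := 1 - b.
have d0 : 0 < d by rewrite /d; lra.
have claim : forall j : nat, exists t', ext t t' /\ good c (1 - d - j%:R * d / 2) t'.
  elim=> [|j [t' [e g']]].
    exists t; split; first exact: ext_refl.
    by rewrite mul0r mul0r subr0 /d opprB addrC subrK.
  have jd : 0 <= j%:R * d by rewrite mulr_ge0 // ltW.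
  have dd : 1 - d / 2 < 1 by lra.
  have key : forall b0, ~ good c (1 - d / 2) (rcons t' (~~ b0)) ->
      exists t'', ext t t'' /\ good c (1 - d - j.+1%:R * d / 2) t''.
    move=> b0 /existsNP [N0 /negP]; rewrite -ltNge => hN0.
    exists (rcons t' b0); split; first exact: (ext_trans _ _ _ e (ext_rcons _ _)).
    move=> N; have := S_rcons c (maxn N N0) t'; have := g' (maxn N N0).
    have := @S_mono c _ _ (rcons t' b0) (leq_maxl N N0).
    have := @S_mono c _ _ (rcons t' (~~ b0)) (leq_maxr N N0).
    have -> : j.+1%:R = j%:R + 1 :> rat by rewrite -addn1 natrD.
    move: jd; set x := j%:R * d.
    rewrite (_ : (j%:R + 1) * d = x + d); last by rewrite /x mulrDl mul1r.
    by case: b0 hN0 => /= hN0; lra.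
  have [h0|h0] := pselect (good c (1 - d / 2) (rcons t' false)).
    by apply: (key false) => h1; exact: (H t' _ e dd h0 h1).
  exact: (key true).
have b2 : 0 <= 2 / d by rewrite divr_ge0 // ltW.
have := archi_boundP b2; set j := Num.Def.archi_bound _ => hj.
have [t' [_ g']] := claim j.
have := g' 0%N; rewrite S0 => h.
move: hj; rewrite ltr_pdivrMr // => hj.
move: h; set x := j%:R * d in hj *.
lra.
Qed.
End Split.

Lemma mu1 s T (z : cantor) : cyl s z -> cyl T z -> (size s <= size T)%N -> mu T s = 1.
Proof.
elim: s T z => [|b s IH] [|a T] z //= hs hT hsz.
have ha := hT 0%N isT; have hb := hs 0%N isT; rewrite /= in ha hb.
have -> : (a == b) by rewrite -ha -hb.
apply: (IH T (fun i => z i.+1)) => // i hi; first [exact: hs i.+1 hi|exact: hT i.+1 hi].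
Qed.

Section Tree.
Variable c : nat -> seq bool.

Definition sp_prop (p q : seq bool * rat) :=
  good c p.2 p.1 -> p.2 < 1 ->
  [/\ ext p.1 q.1, q.2 < 1, good c q.2 (rcons q.1 false) & good c q.2 (rcons q.1 true)].

Lemma sp_ex : exists sp, forall p, sp_prop p (sp p).
Proof.
suff H : forall p, exists q, sp_prop p q by have [f Hf] := choice H; exists f.
move=> p; case: (pselect (good c p.2 p.1 /\ p.2 < 1)) => [[g b]|n].
  by have [t' [ga Ha]] := split_ex c _ _ g b; exists (t', ga).
by exists p => g b; exfalso; apply: n.
Qed.

Fixpoint node (sp : seq bool * rat -> seq bool * rat) (x : cantor) (j : nat) : seq bool * rat :=
  if j is j'.+1 then (rcons (sp (node sp x j')).1 (x j'), (sp (node sp x j')).2)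
  else ([::], two^-1).

Variable sp : seq bool * rat -> seq bool * rat.
Hypothesis Hsp : forall p, sp_prop p (sp p).
Hypothesis Hroot : good c (two^-1) [::].

Lemma node_good x j : good c (node sp x j).2 (node sp x j).1 /\ (node sp x j).2 < 1.
Proof.
elim: j => [|j [g b]] /=.
  split => //; rewrite /two; lra.
have [_ b' g0 g1] := Hsp _ g b.
by split => //; case: (x j).
Qed.

Lemma node_ext x j : ext (node sp x j).1 (node sp x j.+1).1.
Proof.
have [g b] := node_good x j; have [e _ _ _] := Hsp _ g b.
exact: (ext_trans _ _ _ e (ext_rcons _ _)).
Qed.

Lemma node_size x j : (j <= size (node sp x j).1)%N.
Proof.
elim: j => //= j IH; rewrite size_rcons ltnS.
have [g b] := node_good x j; have [[e _] _ _ _] := Hsp _ g b.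
exact: leq_trans IH e.
Qed.

Lemma node_ext_le x j j' : (j <= j')%N -> ext (node sp x j).1 (node sp x j').1.
Proof.
elim: j' => [|j' IH]; first by rewrite leqn0 => /eqP ->; exact: ext_refl.
rewrite leq_eqVlt => /orP [/eqP ->|]; first exact: ext_refl.
by rewrite ltnS => /IH h; exact: (ext_trans _ _ _ h (node_ext x j')).
Qed.

Definition zpt (x : cantor) : cantor := fun i => nth false (node sp x i.+1).1 i.

Lemma zpt_cyl x j : cyl (node sp x j).1 (zpt x).
Proof.
move=> i hi; rewrite /zpt.
case: (leqP j i.+1) => hj.
  by have [_ e] := node_ext_le x _ _ hj; rewrite e.
have [_ e] := node_ext_le x _ _ (ltnW hj); rewrite e //.
exact: node_size.
Qed.

Lemma zpt_bit x j : zpt x (size (sp (node sp x j)).1) = x j.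
Proof.
have := zpt_cyl x j.+1 (size (sp (node sp x j)).1); rewrite /= size_rcons => ->//.
by rewrite nth_rcons ltnn eqxx.
Qed.

Lemma zpt_inj : injective zpt.
Proof.
move=> x x' E.
have N : forall j, node sp x j = node sp x' j.
  elim=> //= j IH; rewrite -IH; congr pair; congr rcons.
  by rewrite -zpt_bit E IH zpt_bit.
apply: funext => j; by rewrite -zpt_bit E N zpt_bit.
Qed.

Lemma zpt_out x n : ~ cyl (c n) (zpt x).
Proof.
move=> h.
set T := (node sp x (size (c n))).1.
have m1 : mu T (c n) = 1 := mu1 _ _ _ h (zpt_cyl _ _) (node_size _ _).
have [g b] := node_good x (size (c n)).
have := g n.+1; rewrite /S big_nat_recr //= -/(S c n T) m1.
have : 0 <= S c n T by apply: sumr_ge0 => i _; exact: mu_ge0.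
move: b; set y := (node sp x (size (c n))).2; lra.
Qed.
End Tree.

Lemma null_compl A : null_set A -> exists g : cantor -> cantor, injective g /\ forall x, ~ A (g x).
Proof.
move=> /(_ 1%N) [c [cov bnd]].
have [sp Hsp] := sp_ex c.
have Hr : good c (two^-1) [::].
  move=> N; rewrite /S /= big_mkord; have := bnd N; by rewrite expr1.
exists (zpt sp); split; first exact: (zpt_inj c sp Hsp Hr).
move=> x /cov [n _ h]; exact: (zpt_out c sp Hsp Hr x n h).
Qed.

Lemma null_of (A : set cantor) :
  (forall k, exists s : nat -> seq bool, A `<=` \bigcup_n cyl (s n) /\
     forall N, \sum_(0 <= n < N) two ^- size (s n) <= two ^- k) -> null_set A.
Proof.
move=> H k; have [s [cv b]] := H k; exists s; split=> // N.
have := b N; rewrite big_mkord => h; exact h.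
Qed.

Lemma null_my (A : set cantor) : null_set A -> forall k,
  exists s : nat -> seq bool, A `<=` \bigcup_n cyl (s n) /\
     forall N, \sum_(0 <= n < N) two ^- size (s n) <= two ^- k.
Proof.
move=> H k; have [s [cv b]] := H k; exists s; split=> // N.
rewrite big_mkord; exact (b N).
Qed.

Lemma half2 (u : rat) : u / two + u / two = u.
Proof. by rewrite -mulrDl -mulr2n -mulr_natr mulfK // two_neq0. Qed.

Lemma geo m N : \sum_(0 <= n < N) two ^- (m + n).+1 = two ^- m - two ^- (m + N).
Proof.
elim: N => [|N IH]; first by rewrite big_geq // addn0 subrr.
rewrite big_nat_recr //= IH addnS tpowS.
have := half2 (two ^- (m + N)); set u := two ^- (m + N); set v := u / two; lra.
Qed.

Lemma geo_le m N : \sum_(0 <= n < N) two ^- (m + n).+1 <= two ^- m.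
Proof. rewrite geo; have := tpow_gt0 (m + N); lra. Qed.

Lemma null_sub (A B : set cantor) : A `<=` B -> null_set B -> null_set A.
Proof.
move=> AB nB k; have [s [cv bd]] := nB k; exists s; split => //.
by move=> z /AB /cv.
Qed.

Lemma fin_null (A : set cantor) :
  (forall k, exists L : seq (seq bool),
      (forall z, A z -> exists2 s, s \in L & cyl s z) /\
      \sum_(s <- L) two ^- size s <= two ^- k) -> null_set A.
Proof.
move=> H; apply: null_of => k; have [L [cov bnd]] := H k.+1.
exists (fun n => nth (nseq (k.+1 + n).+1 false) L n); split.
  move=> z /cov [s sL cs]; exists (index s L) => //; by rewrite nth_index.
move=> N.
pose h n := if (n < size L)%N then two ^- size (nth [::] L n) else 0.
have h0 n : 0 <= h n by rewrite /h; case: ifP => _ //; exact: ltW (tpow_gt0 _).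
apply: (@le_trans _ _ (\sum_(0 <= n < N) (h n + two ^- (k.+1 + n).+1))).
  apply: ler_sum => n _; rewrite /h; case: (ltnP n (size L)) => hn.
    by rewrite (set_nth_default [::]) // lerDl; exact: ltW (tpow_gt0 _).
  by rewrite nth_default // size_nseq add0r.
rewrite big_split /=.
have g := geo_le k.+1 N.
have hL : \sum_(0 <= n < N) h n <= \sum_(s <- L) two ^- size s.
  apply: (@le_trans _ _ (\sum_(0 <= n < maxn N (size L)) h n)).
    rewrite (big_cat_nat (leq0n N) (leq_maxl N (size L))) /= lerDl.
    by apply: sumr_ge0 => i _.
  rewrite (big_cat_nat (leq0n (size L)) (leq_maxr N (size L))) /=.
  rewrite [X in _ + X](_ : _ = 0) ?addr0; last first.
    rewrite big_nat_cond; apply: big1 => i /andP [/andP [hi _] _].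
    by rewrite /h ltnNge hi.
  rewrite [X in _ <= X](big_nth [::]) big_nat_cond [X in _ <= X]big_nat_cond.
  apply: ler_sum => i /andP [/andP [_ hi] _].
  by rewrite /h hi.
have := half2 (two ^- k); rewrite -tpowS.
move: bnd hL g; set a := \sum_(s <- L) _; set b := \sum_(0 <= n < N) h n.
set c := \sum_(0 <= n < N) _; lra.
Qed.

Definition pref (x : cantor) k := mkseq x k.
Lemma size_pref x k : size (pref x k) = k. Proof. exact: size_mkseq. Qed.
Lemma nth_pref x k i : (i < k)%N -> nth false (pref x k) i = x i.
Proof. exact: nth_mkseq. Qed.

Lemma cyl_pref x k : cyl (pref x k) x.
Proof. by move=> i; rewrite size_pref => hi; rewrite nth_pref. Qed.

Lemma null_set1 (y : cantor) : null_set [set y].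
Proof.
apply: fin_null => k; exists [:: pref y k]; split.
  by move=> z ->; exists (pref y k); [rewrite inE|exact: cyl_pref].
by rewrite big_cons big_nil addr0 size_pref.
Qed.

Lemma null_U1 (A : set cantor) y : null_set A -> null_set (A `|` [set y]).
Proof.
move=> nA; apply: null_of => k; have [c [cov bnd]] := null_my A nA k.+1.
exists (fun n => if n is n'.+1 then c n' else pref y k.+1); split.
  move=> z [/cov [n _ h]|->]; first by exists n.+1.
  by exists 0%N => //; exact: cyl_pref.
case=> [|N]; first by rewrite big_geq //; exact: ltW (tpow_gt0 _).
rewrite big_nat_recl // /= ?size_pref ?size_mkseq ?size_map ?size_iota.
have := bnd N; have := half2 (two ^- k); rewrite -tpowS.
set a := \sum_(0 <= i < N) _; set u := two ^- k.+1; lra.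
Qed.

Definition e (x y : cantor) : cantor := fun n => if odd n then y n./2 else x n./2.

Lemma e_even x y n : e x y n.*2 = x n.
Proof. by rewrite /e odd_double doubleK. Qed.
Lemma e_odd x y n : e x y n.*2.+1 = y n.
Proof. by rewrite /e /= odd_double /= uphalf_double. Qed.

Fixpoint intl (u v : seq bool) : seq bool :=
  match u, v with a :: u', b :: v' => a :: b :: intl u' v' | _, _ => [::] end.

Lemma intl_size u v : size u = size v -> size (intl u v) = (size u).*2.
Proof.
by elim: u v => [|a u IH] [|b v] //= [h]; rewrite IH // doubleS.
Qed.

Lemma nth_intl u v i : size u = size v -> (i < (size u).*2)%N ->
  nth false (intl u v) i = if odd i then nth false v i./2 else nth false u i./2.
Proof.
elim: u v i => [|a u IH] [|b v] // [|[|i]] //= [h] hi.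
by rewrite IH ?negbK.
Qed.

Lemma cyl_intl x y k : cyl (intl (pref x k) (pref y k)) (e x y).
Proof.
move=> i; rewrite intl_size ?size_pref // => hi.
rewrite nth_intl ?size_pref // /e.
have hk : (i./2 < k)%N by rewrite ltn_half_double.
by case: odd; rewrite nth_pref.
Qed.

Fixpoint allseq k : seq (seq bool) :=
  if k is k'.+1 then map (cons false) (allseq k') ++ map (cons true) (allseq k')
  else [:: [::]].

Lemma mem_allseq w : w \in allseq (size w).
Proof.
elim: w => [|b w IH] /=; first by rewrite inE.
by rewrite mem_cat; case: b; rewrite map_f ?orbT.
Qed.

Lemma allseq_size k w : w \in allseq k -> size w = k.
Proof.
elim: k w => [|k IH] w /=; first by rewrite inE => /eqP ->.
by rewrite mem_cat => /orP [] /mapP [w' /IH h ->] /=; rewrite h.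
Qed.

Lemma size_allseq k : size (allseq k) = (2 ^ k)%N.
Proof. by elim: k => //= k IH; rewrite size_cat !size_map IH expnS mul2n addnn. Qed.

Lemma sum_const_size (L : seq (seq bool)) m : (forall s, s \in L -> size s = m) ->
  \sum_(s <- L) two ^- size s = (size L)%:R * two ^- m.
Proof.
elim: L => [|s L IH] H; first by rewrite big_nil mul0r.
rewrite big_cons IH => [|t tL]; last by apply: H; rewrite inE tL orbT.
by rewrite H ?inE ?eqxx // /= -addn1 natrD mulrDl mul1r addrC.
Qed.

Definition fiber (x : cantor) : set cantor := range (e x).

Lemma null_fiber x : null_set (fiber x).
Proof.
apply: fin_null => k.
exists (map (intl (pref x k)) (allseq k)); split.
  move=> z [y _ <-]; exists (intl (pref x k) (pref y k)); last exact: cyl_intl.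
  by apply: map_f; have := mem_allseq (pref y k); rewrite size_pref.
rewrite (sum_const_size _ (k.*2)); last first.
  move=> s /mapP [w wA ->]; rewrite intl_size size_pref //.
  by rewrite (allseq_size _ _ wA).
rewrite size_map size_allseq natrX -/two -addnn exprD invfM mulrA mulfV ?mul1r //.
exact (expf_neq0 _ two_neq0).
Qed.

Local Open Scope card_scope.

Lemma inj_le (X : set (set cantor)) (f : cantor -> set cantor) :
  injective f -> (forall x, X (f x)) -> [set: cantor] #<= X.
Proof.
move=> fi fX.
apply: (@card_le_trans _ _ _ (f @` setT)).
  have := @inj_card_eq _ _ setT f (in2W fi).
  by rewrite card_eq_sym card_eq_le => /andP [].
by apply: subset_card_le => _ [x _ <-]; exact: fX x.
Qed.

Lemma sing_nonempty (y : cantor) : null_nonempty [set y].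
Proof.
split; first exact: null_set1.
by move=> h; have : [set y] y by []; rewrite h.
Qed.

Lemma comp X : maximal_antichain X -> forall B, null_set B -> B <> set0 ->
  exists2 D, X D & (D `<=` B \/ B `<=` D).
Proof.
move=> [[XN Xac] Xmax] B nB neB; apply: contrapT => H.
have H' : forall D, X D -> ~ D `<=` B /\ ~ B `<=` D.
  by move=> D XD; split => h; apply: H; exists D => //; [left|right].
have BX : ~ X B by move=> XB; have [_ h] := H' B XB; apply: h.
have Yac : antichain (X `|` [set B]).
  split; first by move=> D [XD|->]; [exact: XN|].
  move=> a b [Xa|->] [Xb|->] ne.
  - exact: Xac.
  - exact: H' a Xa.
  - by have [h1 h2] := H' b Xb; split.
  - by [].
have E := Xmax _ Yac (fun D XD => or_introl XD).
by apply: BX; rewrite -E; right.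
Qed.

Definition Bset (A : set cantor) (a g : cantor) : set cantor :=
  (A `\` [set a]) `|` [set g].

Definition Pr (A E : set cantor) (a g : cantor) :=
  (E g /\ E `<=` Bset A a g) \/ (Bset A a g `<=` E /\ ~ E a).

Lemma diag_inj (A E : set cantor) (a g : cantor -> cantor) t t' :
  injective a -> injective g -> (forall t, A (a t)) -> (forall t, ~ A (g t)) ->
  Pr A E (a t) (g t) -> Pr A E (a t') (g t') -> t = t'.
Proof.
move=> ai gi aA gA [[E1 S1]|[S1 N1]] [[E2 S2]|[S2 N2]].
- case: (S2 _ E1) => [[h _]|h]; [by case: (gA t)|exact: gi].
- case: (S1 _ (S2 _ (or_intror erefl))) => [[h _]|h]; [by case: (gA t')|exact: gi].
- case: (S2 _ (S1 _ (or_intror erefl))) => [[h _]|h]; [by case: (gA t)|exact: gi].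
- apply: ai; apply: contrapT => ne; apply: N1; apply: S2; left; split => //.
Qed.

Lemma fiber_inj x x' w : fiber x w -> fiber x' w -> x = x'.
Proof.
move=> [y _ <-] [y' _ E]; apply/funext => n.
by rewrite -(e_even x y n) -E e_even.
Qed.

Lemma e_inj x : injective (e x).
Proof. by move=> y y' E; apply/funext => n; rewrite -(e_odd x y n) E e_odd. Qed.

Theorem mainTheorem12 :
  (exists X : set (set cantor), maximal_antichain X /\ X #= [set: cantor]) /\
  (forall X : set (set cantor), maximal_antichain X -> [set: cantor] #<= X).
Proof.
split.
  have sinj : injective (fun x : cantor => [set x]).
    by move=> x y h; have : [set x] x by []; rewrite h.
  exists (range (fun x : cantor => [set x])); split; last first.
    exact: (inj_card_eq (in2W sinj)).
  split.
    split; first by move=> _ [x _ <-]; exact: sing_nonempty.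
    move=> _ _ [x _ <-] [y _ <-] ne; split => h; apply: ne.
      by have := h x erefl => /= ->.
    by have := h y erefl => /= ->.
  move=> Y [YN Yac] sub; apply/seteqP; split; last exact: sub.
  move=> B YB; have [nB neB] := YN B YB.
  have [x Bx] : exists x, B x by apply/set0P/eqP.
  have Yx : Y [set x] by apply: sub; exists x.
  case: (pselect ([set x] = B)) => [<-|ne]; first by exists x.
  by have [h _] := Yac _ _ Yx YB ne; exfalso; apply: h => w ->.
move=> X XM; have [[XN Xac] Xmax] := XM.
have cmp := comp X XM.
have hF : forall x, exists D, X D /\ (D `<=` fiber x \/ fiber x `<=` D).
  move=> x; have [|D XD h] := cmp (fiber x) (null_fiber x); last by exists D.
  move=> h; have hx : fiber x (e x x) by exists x.
  by rewrite h in hx.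
have [Df HDf] := choice hF.
case: (pselect (forall x, Df x `<=` fiber x)) => [allsub|/existsNP [x0 nsub]].
  apply: (inj_le _ Df) => [x x' E|x]; last by case: (HDf x).
  have [_ ne] := XN _ (proj1 (HDf x)).
  have [w Dw] : exists w, Df x w by apply/set0P/eqP.
  apply: (fiber_inj _ _ w); first exact: (allsub x) w Dw.
  by apply: ((allsub x') w); rewrite -E.
have [XA hA] := HDf x0; set A := Df x0 in XA hA.
have FA : fiber x0 `<=` A by case: hA.
have [nA neA] := XN A XA.
have [g [ginj gout]] := null_compl A nA.
have aA : forall t, A (e x0 t) by move=> t; apply: FA; exists t.
have hB : forall t, exists D, X D /\ Pr A D (e x0 t) (g t).
  move=> t.
  have nB : null_set (Bset A (e x0 t) (g t)).
    apply: null_sub (null_U1 A (g t) nA) => w [[h _]|->]; [by left|by right].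
  have [|D XD h] := cmp _ nB.
    move=> h; have hx : Bset A (e x0 t) (g t) (g t) by right.
    by rewrite h in hx.
  exists D; split => //.
  have DA : D <> A.
    move=> DAe; rewrite DAe in h; case: h => h.
      by case: (h _ (aA t)) => [[_ []]|h'] //; apply: (gout t); rewrite -h'.
    by apply: (gout t); apply: h; right.
  have [nDA nAD] := Xac D A XD XA DA.
  case: h => h; [left|right]; split => //.
    apply: contrapT => ng; apply: nDA => w Dw.
    by case: (h w Dw) => [[]//|ew]; exfalso; apply: ng; rewrite -ew.
  move=> Da; apply: nAD => w Aw.
  case: (pselect (w = e x0 t)) => [->//|ne]; apply: h; left; split => //.
have [Dt HDt] := choice hB.
apply: (inj_le _ Dt) => [t t' E|t]; last by case: (HDt t).
have [_ P1] := HDt t; have [_ P2] := HDt t'; rewrite E in P1.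
exact: (diag_inj A _ (e x0) g t t' (e_inj x0) ginj aA gout P1 P2).
Qed.
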